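(* Let $N\ge 2$ be an integer and $\lambda>0$, $\mu>0$, $\Delta\ge 0$, $T_{cl}>0$ real ($T_{cl}=\mathbb{E}[T_{\text{cl}}]$, the expected cloud time). For each integer $c\in\{1,\dots,N\}$ let $a(c)=\lambda(\Delta+\frac{c}{N\mu})$ and $P_b(c)=\frac{a(c)^c/c!}{\sum_{j=0}^{c}a(c)^j/j!}$. For each positive divisor $c$ of $N$ (with $m=N/c$) define the average system time $$\mathbb{E}[T_{\text{sys}}(c)]=(1-P_b(c))\Big(\Delta+\frac{c}{N\mu}\Big)+P_b(c)\,T_{cl}.$$ (i) If $$T_{cl}\ge\frac{1}{\mu}\,\frac{1-\frac1N-P_b(N)+\frac{P_b(1)}{N}}{P_b(\lfloor N/2\rfloor)-P_b(N)}+\Delta,$$ then $\mathbb{E}[T_{\text{sys}}(c)]$ is minimized over the positive divisors $c$ of $N$ at $c=N$ (i.e. $m=1$). (ii) Assume $N\ge 3$. If $T_{cl}\in\big(\Delta+\frac{1}{N\mu},\,\Delta+\frac1\mu\big)$ and $\lambda\le\frac{N\mu}{(N-2)(\Delta N\mu+1)}$, then $\mathbb{E}[T_{\text{sys}}(c)]$ is minimized over the positive divisors $c$ of $N$ at $c=1$ (i.e. $m=N$).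
   Context: Model: an edge system has $N$ workers split into $c$ groups of $m=N/c$ workers each. Jobs arrive as a Poisson process of rate $\lambda$; each job is replicated to the $m$ workers of a free group, and a job finding all groups busy is blocked and executed in the cloud, taking expected time $T_{cl}$. Worker service times are shifted exponential $\mathrm{SExp}(\Delta,\mu)$ ($\Delta$ plus an exponential of rate $\mu$), so the job-computing time has mean $\Delta+\frac{1}{m\mu}=\Delta+\frac{c}{N\mu}$. Blocking is modeled by an M/G/c/c loss queue, giving the Erlang B blocking probability $P_b(c)$ with offered load $a(c)=\lambda\,\mathbb{E}[T_{\text{job}}]$. The average system time is $(1-P_b)\mathbb{E}[T_{\text{job}}]+P_b\,\mathbb{E}[T_{\text{cl}}]$. *)

(* Defs.v *)
From Stdlib Require Import Reals Arith.
Open Scope R_scope.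

Definition load (N : nat) (lam mu Delta : R) (c : nat) : R :=
  lam * (Delta + INR c / (INR N * mu)).

Definition erlangB (c : nat) (a : R) : R :=
  (a ^ c / INR (fact c)) / sum_f_R0 (fun j => a ^ j / INR (fact j)) c.

Definition Pb (N : nat) (lam mu Delta : R) (c : nat) : R :=
  erlangB c (load N lam mu Delta c).

Definition Tsys (N : nat) (lam mu Delta Tcl : R) (c : nat) : R :=
  (1 - Pb N lam mu Delta c) * (Delta + INR c / (INR N * mu))
  + Pb N lam mu Delta c * Tcl.

Definition minimizes_over_divisors (N : nat) (lam mu Delta Tcl : R) (c0 : nat) : Prop :=
  forall c : nat, (1 <= c)%nat -> Nat.divide c N ->
    Tsys N lam mu Delta Tcl c0 <= Tsys N lam mu Delta Tcl c.

(* Main.v *)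
Require Import Defs.
From Stdlib Require Import Reals Arith Lra Lia Psatz.
Open Scope R_scope.

Fixpoint Sinv (n : nat) (a : R) : R :=
  match n with
  | O => 1
  | S k => 1 + INR (S k) / a * Sinv k a
  end.

Lemma Sinv_ge1 n a : 0 < a -> 1 <= Sinv n a.
Proof.
  intro Ha; induction n as [|n IH]; cbn [Sinv]; [lra|].
  assert (0 < INR (S n) / a) by (apply Rdiv_lt_0_compat; [apply lt_0_INR; lia|lra]).
  assert (0 <= INR (S n) / a * Sinv n a) by (apply Rmult_le_pos; lra).
  lra.
Qed.

Lemma sum_eq n a : 0 < a ->
  sum_f_R0 (fun j => a ^ j / INR (fact j)) n = a ^ n / INR (fact n) * Sinv n a.
Proof.
  intro Ha; induction n as [|n IH].
  - simpl. field.
  - change (sum_f_R0 (fun j => a ^ j / INR (fact j)) (S n)) with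
      (sum_f_R0 (fun j => a ^ j / INR (fact j)) n + a ^ (S n) / INR (fact (S n))).
    rewrite IH. change (Sinv (S n) a) with (1 + INR (S n) / a * Sinv n a).
    rewrite fact_simpl, mult_INR. simpl pow.
    assert (INR (fact n) <> 0) by apply INR_fact_neq_0.
    assert (INR (S n) <> 0) by (apply not_0_INR; lia).
    field. lra.
Qed.

Lemma erlang_eq n a : 0 < a -> erlangB n a = / Sinv n a.
Proof.
  intro Ha. unfold erlangB. rewrite sum_eq by exact Ha.
  assert (0 < a ^ n) by (apply pow_lt; lra).
  assert (0 < INR (fact n)) by (apply INR_fact_lt_0).
  assert (1 <= Sinv n a) by (apply Sinv_ge1; lra).
  field. split; lra.
Qed.

Lemma Sinv_strict n : forall a a', 0 < a -> a <= a' ->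
  INR (S n) * a >= INR n * a' -> Sinv n a < Sinv (S n) a'.
Proof.
  induction n as [|n IH]; intros a a' Ha Haa' H.
  - simpl. assert (0 < 1 / a') by (apply Rdiv_lt_0_compat; lra). lra.
  - assert (IH' : Sinv n a < Sinv (S n) a').
    { apply IH; auto. rewrite !S_INR in H. rewrite S_INR. nra. }
    change (Sinv (S n) a) with (1 + INR (S n) / a * Sinv n a).
    change (Sinv (S (S n)) a') with (1 + INR (S (S n)) / a' * Sinv (S n) a').
    assert (Hs : 1 <= Sinv n a) by (apply Sinv_ge1; lra).
    assert (Hx : 0 < INR (S n) / a) by (apply Rdiv_lt_0_compat; [apply lt_0_INR; lia|lra]).
    assert (Hxy : INR (S n) / a <= INR (S (S n)) / a').
    { assert (E : INR (S (S n)) / a' - INR (S n) / a =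
              (INR (S (S n)) * a - INR (S n) * a') / (a * a')) by (field; repeat split; lra).
      assert (0 <= (INR (S (S n)) * a - INR (S n) * a') / (a * a')).
      { apply Rle_mult_inv_pos; nra. }
      lra. }
    nra.
Qed.

Section L.
Variables (N : nat) (lam mu Delta : R).
Hypothesis (HN : (1 <= N)%nat) (Hlam : 0 < lam) (Hmu : 0 < mu) (HDelta : 0 <= Delta).

Lemma N_pos : 0 < INR N.
Proof. apply lt_0_INR; lia. Qed.

Lemma K_pos : 0 < INR N * mu.
Proof. assert (0 < INR N) by (apply lt_0_INR; lia). nra. Qed.

Lemma load_pos c : (1 <= c)%nat -> 0 < load N lam mu Delta c.
Proof.
  intro Hc. unfold load. pose proof K_pos.
  assert (0 < INR c / (INR N * mu)) by (apply Rdiv_lt_0_compat; [apply lt_0_INR; lia|lra]).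
  nra.
Qed.

Lemma Pb_eq c : (1 <= c)%nat -> Pb N lam mu Delta c = / Sinv c (load N lam mu Delta c).
Proof. intro Hc. unfold Pb. apply erlang_eq, load_pos, Hc. Qed.

Lemma Q_step c : (1 <= c)%nat ->
  Sinv c (load N lam mu Delta c) < Sinv (S c) (load N lam mu Delta (S c)).
Proof.
  intro Hc. pose proof K_pos. pose proof N_pos. apply Sinv_strict.
  - apply load_pos; auto.
  - unfold load. rewrite S_INR.
    assert (0 <= 1 / (INR N * mu)) by (apply Rlt_le, Rdiv_lt_0_compat; lra).
    assert (E : lam * (Delta + (INR c + 1) / (INR N * mu)) =
                lam * (Delta + INR c / (INR N * mu)) + lam * (1 / (INR N * mu))) by (field; repeat split; lra).
    rewrite E. assert (0 <= lam * (1 / (INR N * mu))) by (apply Rmult_le_pos; lra). lra.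
  - unfold load. rewrite S_INR.
    assert (E : (INR c + 1) * (lam * (Delta + INR c / (INR N * mu))) -
                INR c * (lam * (Delta + (INR c + 1) / (INR N * mu))) = lam * Delta) by (field; repeat split; lra).
    assert (0 <= lam * Delta) by (apply Rmult_le_pos; lra). lra.
Qed.

Lemma Q_mono c d : (1 <= c)%nat -> (c < d)%nat ->
  Sinv c (load N lam mu Delta c) < Sinv d (load N lam mu Delta d).
Proof.
  intros Hc Hcd. induction d as [|d IH]; [lia|].
  destruct (Nat.eq_dec c d) as [->|Hne].
  - apply Q_step; auto.
  - eapply Rlt_trans; [apply IH; lia|apply Q_step; lia].
Qed.

Lemma Pb_lt c d : (1 <= c)%nat -> (c < d)%nat ->
  Pb N lam mu Delta d < Pb N lam mu Delta c.
Proof.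
  intros Hc Hcd. rewrite !Pb_eq by lia.
  assert (1 <= Sinv c (load N lam mu Delta c)) by (apply Sinv_ge1, load_pos; lia).
  pose proof (Q_mono c d Hc Hcd).
  apply Rinv_lt_contravar; nra.
Qed.

Lemma Pb_le c d : (1 <= c)%nat -> (c <= d)%nat ->
  Pb N lam mu Delta d <= Pb N lam mu Delta c.
Proof.
  intros Hc Hcd. destruct (Nat.eq_dec c d) as [->|]; [lra|].
  apply Rlt_le, Pb_lt; lia.
Qed.

Lemma Pb_range c : (1 <= c)%nat -> 0 < Pb N lam mu Delta c <= 1.
Proof.
  intro Hc. rewrite Pb_eq by lia.
  assert (1 <= Sinv c (load N lam mu Delta c)) by (apply Sinv_ge1, load_pos; lia).
  split; [apply Rinv_0_lt_compat; lra|].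
  rewrite <- Rinv_1. apply Rinv_le_contravar; lra.
Qed.

Lemma Pb1 : Pb N lam mu Delta 1 =
  load N lam mu Delta 1 / (1 + load N lam mu Delta 1).
Proof.
  rewrite Pb_eq by lia. pose proof (load_pos 1 (le_n 1)).
  simpl Sinv. simpl INR. field. lra.
Qed.

End L.

Lemma div_half c N : (1 <= c)%nat -> Nat.divide c N -> (c < N)%nat -> (c <= N / 2)%nat.
Proof.
  intros Hc [k Hk] HcN.
  pose proof (Nat.div_mod N 2 ltac:(lia)). pose proof (Nat.mod_upper_bound N 2 ltac:(lia)).
  destruct k as [|[|k]]; nia.
Qed.

Lemma num_lemma Nr a1 aN t : 2 <= Nr -> 0 < a1 -> 0 < aN -> 0 <= t ->
  t * aN >= Nr -> Nr * Nr * a1 >= aN ->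
  0 <= 1 - 1 / Nr - / (1 + t) + a1 / (1 + a1) / Nr.
Proof.
  intros HN Ha1 HaN Ht H1 H2.
  assert (H3 : t * (Nr * Nr * a1) >= Nr) by nra.
  assert (H4 : t * Nr * a1 >= 1) by nra.
  assert (E : 1 - 1 / Nr - / (1 + t) + a1 / (1 + a1) / Nr =
     ((Nr - 1) * t + Nr * a1 * t - 1) / (Nr * (1 + t) * (1 + a1))) by (field; repeat split; lra).
  rewrite E. apply Rle_mult_inv_pos; [nra|].
  apply Rmult_lt_0_compat; [apply Rmult_lt_0_compat|]; lra.
Qed.

Theorem theorem2 (N : nat) (lam mu Delta Tcl : R)
  (HN : (2 <= N)%nat) (Hlam : 0 < lam) (Hmu : 0 < mu)
  (HDelta : 0 <= Delta) (HTcl : 0 < Tcl) :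
  ( Tcl >= 1 / mu *
      ((1 - 1 / INR N - Pb N lam mu Delta N + Pb N lam mu Delta 1 / INR N)
       / (Pb N lam mu Delta (N / 2) - Pb N lam mu Delta N)) + Delta ->
    minimizes_over_divisors N lam mu Delta Tcl N )
  /\
  ( (3 <= N)%nat ->
    Delta + 1 / (INR N * mu) < Tcl -> Tcl < Delta + 1 / mu ->
    lam <= INR N * mu / ((INR N - 2) * (Delta * INR N * mu + 1)) ->
    minimizes_over_divisors N lam mu Delta Tcl 1 ).
Proof.
  assert (HN1 : (1 <= N)%nat) by lia.
  assert (HNr : 2 <= INR N) by (replace 2 with (INR 2) by (simpl; lra); apply le_INR; lia).
  pose proof (K_pos N mu HN1 Hmu) as HK.
  split.
  - intros Hb c Hc Hdiv.
    destruct (Nat.eq_dec c N) as [->|HcN]; [apply Rle_refl|].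
    assert (HcN' : (c < N)%nat) by (pose proof (Nat.divide_pos_le c N ltac:(lia) Hdiv); lia).
    pose proof (div_half c N Hc Hdiv HcN') as Hch.
    assert (Hh1 : (1 <= N / 2)%nat) by (apply Nat.div_le_lower_bound; lia).
    assert (HhN : (N / 2 < N)%nat) by (apply Nat.div_lt; lia).
    set (pN := Pb N lam mu Delta N) in *.
    set (ph := Pb N lam mu Delta (N / 2)) in *.
    set (p1 := Pb N lam mu Delta 1) in *.
    set (pc := Pb N lam mu Delta c) in *.
    assert (Hden : pN < ph) by (apply Pb_lt; auto).
    assert (Hcph : ph <= pc) by (apply Pb_le; auto).
    assert (Hpc1 : pc <= p1) by (apply Pb_le; auto).
    pose proof (Pb_range N lam mu Delta HN1 Hlam Hmu HDelta c Hc) as Rc.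
    pose proof (Pb_range N lam mu Delta HN1 Hlam Hmu HDelta 1 (le_n 1)) as R1.
    pose proof (Pb_range N lam mu Delta HN1 Hlam Hmu HDelta N HN1) as RN.
    fold pc p1 pN in Rc, R1, RN.
    assert (Hnum : 0 <= 1 - 1 / INR N - pN + p1 / INR N).
    { unfold pN, p1. rewrite Pb1 by auto. rewrite (Pb_eq N) by auto.
      pose proof (load_pos N lam mu Delta HN1 Hlam Hmu HDelta 1 (le_n 1)) as Ha1.
      pose proof (load_pos N lam mu Delta HN1 Hlam Hmu HDelta N HN1) as HaN.
      assert (Hl : INR N * INR N * load N lam mu Delta 1 >= load N lam mu Delta N).
      { unfold load. simpl INR.
        assert (E1 : INR N * INR N * (lam * (Delta + 1 / (INR N * mu))) =
                     INR N * INR N * lam * Delta + INR N * (lam / mu)) by (field; repeat split; lra).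
        assert (E2 : lam * (Delta + INR N / (INR N * mu)) = lam * Delta + lam / mu) by (field; repeat split; lra).
        rewrite E1, E2.
        assert (0 <= lam * Delta) by (apply Rmult_le_pos; lra).
        assert (0 < lam / mu) by (apply Rdiv_lt_0_compat; lra).
        assert (0 <= (INR N * INR N - 1) * (lam * Delta)) by (apply Rmult_le_pos; nra).
        assert (0 <= (INR N - 1) * (lam / mu)) by (apply Rmult_le_pos; lra).
        nra. }
      revert Hl HaN. generalize (load N lam mu Delta N) as aN. intros aN Hl HaN.
      destruct N as [|n]; [lia|]. cbn [Sinv].
      pose proof (Sinv_ge1 n aN HaN).
      assert (0 < INR (S n) / aN) by (apply Rdiv_lt_0_compat; lra).
      apply (num_lemma _ _ aN); auto; try nra.
      assert (E : INR (S n) / aN * Sinv n aN * aN = INR (S n) * Sinv n aN) by (field; lra).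
      rewrite E. nra. }
    set (num := 1 - 1 / INR N - pN + p1 / INR N) in *.
    set (X := Tcl - Delta).
    assert (HX0 : 0 <= 1 / mu * (num / (ph - pN))).
    { apply Rmult_le_pos; [apply Rlt_le, Rdiv_lt_0_compat; lra|].
      apply Rle_mult_inv_pos; lra. }
    assert (S1 : (ph - pN) * X >= num / mu).
    { assert (E : (ph - pN) * (1 / mu * (num / (ph - pN))) = num / mu) by (field; repeat split; lra).
      unfold X. nra. }
    assert (S2 : (pc - pN) * X >= (ph - pN) * X) by (unfold X in *; nra).
    assert (Hc1 : 1 <= INR c) by (replace 1 with (INR 1) by reflexivity; apply le_INR; lia).
    assert (S3 : INR c * (1 - pc) >= 1 - p1) by nra.
    unfold minimizes_over_divisors, Tsys. fold pN pc.
    replace (INR N / (INR N * mu)) with (1 / mu) by (field; repeat split; lra).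
    replace (INR c / (INR N * mu)) with (INR c * / (INR N * mu)) by (field; repeat split; lra).
    assert (E : num / mu = (1 - pN) * (1 / mu) - (1 - p1) * / (INR N * mu)) by (unfold num; field; repeat split; lra).
    assert (Hw : 0 < / (INR N * mu)) by (apply Rinv_0_lt_compat; lra).
    assert (S4 : INR c * (1 - pc) * / (INR N * mu) >= (1 - p1) * / (INR N * mu)) by nra.
    unfold X in *. rewrite E in S1. lra.
  - intros HN3 _ HT2 Hlamb c Hc Hdiv.
    destruct (Nat.eq_dec c 1) as [->|Hc1]; [apply Rle_refl|].
    assert (HcN : (c <= N)%nat) by (apply Nat.divide_pos_le; auto; lia).
    assert (HN3r : 3 <= INR N) by (replace 3 with (INR 3) by (simpl; lra); apply le_INR; lia).
    assert (Hc2 : 2 <= INR c) by (replace 2 with (INR 2) by (simpl; lra); apply le_INR; lia).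
    assert (HcNr : INR c <= INR N) by (apply le_INR; lia).
    pose proof (Pb_range N lam mu Delta HN1 Hlam Hmu HDelta c ltac:(lia)) as Rc.
    assert (Hpc1 : Pb N lam mu Delta c <= Pb N lam mu Delta 1) by (apply Pb_le; auto; lia).
    assert (Hp1 : Pb N lam mu Delta 1 * (INR N - 1) <= 1).
    { rewrite Pb1 by auto.
      pose proof (load_pos N lam mu Delta HN1 Hlam Hmu HDelta 1 (le_n 1)) as Ha1.
      assert (Hl : (INR N - 2) * load N lam mu Delta 1 <= 1).
      { unfold load. simpl INR.
        assert (Hdn : 0 <= Delta * INR N * mu) by (apply Rmult_le_pos; [apply Rmult_le_pos|]; lra).
        assert (Hd : 0 < (INR N - 2) * (Delta * INR N * mu + 1)).
        { apply Rmult_lt_0_compat; lra. }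
        apply (Rmult_le_compat_r ((INR N - 2) * (Delta * INR N * mu + 1))) in Hlamb; [|lra].
        assert (E : INR N * mu / ((INR N - 2) * (Delta * INR N * mu + 1)) *
                    ((INR N - 2) * (Delta * INR N * mu + 1)) = INR N * mu) by (field; repeat split; lra).
        rewrite E in Hlamb.
        assert (E2 : (INR N - 2) * (lam * (Delta + 1 / (INR N * mu))) =
           lam * ((INR N - 2) * (Delta * INR N * mu + 1)) / (INR N * mu)) by (field; repeat split; lra).
        rewrite E2. apply (Rmult_le_reg_r (INR N * mu)); [lra|].
        unfold Rdiv. rewrite Rmult_assoc, Rinv_l by lra. lra. }
      set (a := load N lam mu Delta 1) in *.
      assert (E : a / (1 + a) * (INR N - 1) = ((INR N - 1) * a) / (1 + a)) by (field; lra).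
      rewrite E. apply (Rmult_le_reg_r (1 + a)); [lra|].
      unfold Rdiv. rewrite Rmult_assoc, Rinv_l by lra. lra. }
    unfold minimizes_over_divisors, Tsys.
    set (p1 := Pb N lam mu Delta 1) in *.
    set (pc := Pb N lam mu Delta c) in *.
    set (w := / (INR N * mu)).
    assert (Hw : 0 < w) by (apply Rinv_0_lt_compat; lra).
    replace (INR 1 / (INR N * mu)) with w by (unfold w; simpl; field; repeat split; lra).
    replace (INR c / (INR N * mu)) with (INR c * w) by (unfold w; field; repeat split; lra).
    replace (1 / mu) with (INR N * w) in HT2 by (unfold w; field; repeat split; lra).
    assert (H1 : (pc - p1) * (Tcl - Delta) >= (pc - p1) * (INR N * w)).
    { apply Rle_ge, Rmult_le_compat_neg_l; lra. }
    assert (H2 : 0 <= pc * (INR N - INR c) * w).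
    { apply Rmult_le_pos; [apply Rmult_le_pos|]; lra. }
    assert (H3 : p1 * (INR N - 1) * w <= w) by nra.
    nra.
Qed.
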